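(* For all integers $n,i,k\ge 0$, \[ \binom{n}{i}\binom{n+i}{i}\binom{n}{k}\binom{n+k}{k}=\sum_{j\ge0}\binom{i+k}{i}\binom{j}{j-i,\,j-k,\,i+k-j}\binom{n}{j}\binom{n+j}{j}. \]
   Context: $\binom{n}{k}=0$ unless $0\le k\le n$. The multinomial coefficient $\binom{m}{a,b,c}$ equals $\frac{m!}{a!\,b!\,c!}$ if $a,b,c\ge0$ and $a+b+c=m$, and $0$ otherwise. *)

(* Defs.v *)
From mathcomp Require Import all_boot all_order all_algebra.
Set Implicit Arguments. Unset Strict Implicit. Unset Printing Implicit Defensive.

Definition multinom3 (m : nat) (a b c : int) : nat :=
  match a, b, c with
  | Posz a', Posz b', Posz c' =>
      if a' + b' + c' == m then m`! %/ (a'`! * b'`! * c'`!) else 0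
  | _, _, _ => 0
  end.

(* Main.v *)
Require Import Defs.
From mathcomp Require Import all_boot all_order all_algebra.
From mathcomp Require Import ring lra zify.
Import GRing.Theory Num.Theory.
Local Open Scope ring_scope.

Lemma multinomE (i k j : nat) : (j <= i + k)%N ->
  multinom3 j (j%:Z - i%:Z) (j%:Z - k%:Z) (i%:Z + k%:Z - j%:Z) = ('C(j, i) * 'C(i, i + k - j))%N.
Proof.
move=> hj.
have [hij|hij] := leqP i j; last first.
  rewrite bin_small // mul0n.
  have -> : j%:Z - i%:Z = Negz (i - j).-1.
    rewrite NegzE; lia.
  by [].
have [hkj|hkj] := leqP k j; last first.
  rewrite (bin_small (n:=i)) ?muln0; last lia.
  have -> : j%:Z - k%:Z = Negz (k - j).-1.
    rewrite NegzE; lia.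
  by case: (j%:Z - i%:Z).
rewrite !subzn //. idtac.
rewrite /multinom3.
have -> : (j - i + (j - k) + (i + k - j) == j)%N by apply/eqP; lia.
have e1 := bin_fact hij.
have hc : (i + k - j <= i)%N by lia.
have e2 := bin_fact hc.
rewrite (_ : i - (i + k - j) = j - k)%N in e2; last lia.
have -> : j`! = ('C(j, i) * 'C(i, i + k - j)) * ((j - i)`! * (j - k)`! * (i + k - j)`!)%N.
  by rewrite -e1 -e2; ring.
by rewrite mulnK // !muln_gt0 !fact_gt0.
Qed.

Definition Fz (n j : nat) : int := ('C(n, j) * 'C(n + j, j))%N%:Z.

Lemma F_rec n j : Fz n j.+1 * (j.+1)%:Z ^+ 2 =
  Fz n j * (n%:Z * (n%:Z + 1) - j%:Z * (j%:Z + 1)).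
Proof.
rewrite /Fz.
have e1 := mul_bin_left n j.
have e2 := mul_bin_diag (n + j).+1 j.
rewrite /= -addnS in e2.
have [hjn|hjn] := leqP j n; last first.
  by rewrite (@bin_small n j) ?(@bin_small n j.+1) ?mul0n ?mul0r //; lia.
have e3 : (('C(n, j.+1) * 'C(n + j.+1, j.+1)) * (j.+1 * j.+1) =
   ('C(n, j) * 'C(n + j, j)) * ((n - j) * (n + j).+1))%N.
  have h4 : forall a b c d : nat, (a * b * (c * d) = (c * a) * (d * b))%N by move=> *; ring.
  rewrite h4.
  rewrite e1 -e2; ring.
transitivity (('C(n, j) * 'C(n + j, j)) * ((n - j) * (n + j).+1))%N%:Z.
  by rewrite -e3 !PoszM expr2.
rewrite !PoszM; congr (_ * _); rewrite -PoszM -!PoszD -!PoszM subzn; [congr Posz; nia | nia].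
Qed.

Definition Az (i k j : nat) : int := ('C(i + k, i) * 'C(j, i) * 'C(i, i + k - j))%N%:Z.

Lemma A_rec i k j : (j <= i + k)%N ->
  (k.+1)%:Z ^+ 2 * Az i k.+1 j =
  (j%:Z) ^+ 2 * Az i k j.-1 + (j%:Z * (j%:Z + 1) - k%:Z * (k%:Z + 1)) * Az i k j.
Proof.
move=> hj; rewrite /Az addnS !PoszM.
set s := (i + k)%N.
have [hij|hij] := leqP i j; last first.
  rewrite (@bin_small j i) // (@bin_small j.-1 i); last lia.
  by rewrite -[Posz 0]/(0:int) !mulr0 ?mul0r ?addr0.
have [hkj|hkj] := leqP k j; last first.
  rewrite (@bin_small i (s - j)%N) ?(@bin_small i (s.+1 - j)%N) ?(@bin_small i (s - j.-1)%N); try lia.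
case: j hj hij hkj => [|j] hj hij hkj.
  have -> : i = 0%N by lia.
  have -> : k = 0%N by lia.
  by [].
rewrite /= (_ : (s.+1 - j.+1 = (s - j.+1).+1)%N); last lia.
rewrite (_ : (s - j = (s - j.+1).+1)%N); last lia.
set c := (s - j.+1)%N.
have ea := mul_bin_down s.+1 i.
rewrite /= (_ : (s.+1 - i = k.+1)%N) in ea; last lia.
have eb := mul_bin_down j.+1 i.
have ec := mul_bin_left i c.
rewrite (_ : (i - c = j.+1 - k)%N) in ec; last lia.
have ea' : (s.+1)%:Z * ('C(s, i))%:Z = (k.+1)%:Z * ('C(s.+1, i))%:Z by rewrite -!PoszM ea.
have eb' : (j.+1)%:Z * ('C(j, i))%:Z = (j.+1 - i)%N%:Z * ('C(j.+1, i))%:Z by rewrite -!PoszM eb.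
have ec' : (c.+1)%:Z * ('C(i, c.+1))%:Z = (j.+1 - k)%N%:Z * ('C(i, c))%:Z by rewrite -!PoszM ec.
apply: (@mulfI _ (c.+1)%:Z) => //.
set B := ('C(s, i))%:Z; set B' := ('C(s.+1, i))%:Z; set P := ('C(j.+1, i))%:Z.
set P' := ('C(j, i))%:Z; set Q := ('C(i, c))%:Z; set R := ('C(i, c.+1))%:Z.
have hc : (c.+1)%:Z = i%:Z + k%:Z + 1 - (j.+1)%:Z by rewrite /c; lia.
have hk : (k.+1)%:Z = k%:Z + 1 by lia.
have hs : (s.+1)%:Z = i%:Z + k%:Z + 1 by rewrite /s; lia.
have hji : (j.+1 - i)%N%:Z = (j.+1)%:Z - i%:Z by lia.
have hjk : (j.+1 - k)%N%:Z = (j.+1)%:Z - k%:Z by lia.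
transitivity ((k.+1)%:Z * ((k.+1)%:Z * B') * P * ((c.+1)%:Z * R)); first by ring.
rewrite -ea' ec'.
transitivity ((j.+1)%:Z * B * ((j.+1)%:Z * P') * ((c.+1)%:Z * R) +
   (c.+1)%:Z * ((j.+1)%:Z * ((j.+1)%:Z + 1) - k%:Z * (k%:Z + 1)) * B * P * Q); last by ring.
rewrite eb' ec' hc hk hs hji hjk; ring.
Qed.

Lemma A_last i k : (k.+1)%:Z ^+ 2 * Az i k.+1 (i + k).+1 = ((i + k).+1)%:Z ^+ 2 * Az i k (i + k).
Proof.
rewrite /Az addnS !subnn !PoszM.
set s := (i + k)%N.
have ea := mul_bin_down s.+1 i.
rewrite /= (_ : (s.+1 - i = k.+1)%N) in ea; last lia.
have ea' : (s.+1)%:Z * ('C(s, i))%:Z = (k.+1)%:Z * ('C(s.+1, i))%:Z by rewrite -!PoszM ea.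
rewrite !expr2.
transitivity (((k.+1)%:Z * ('C(s.+1, i))%:Z) * ((k.+1)%:Z * ('C(s.+1, i))%:Z) * ('C(i, 0))%:Z); first by ring.
by rewrite -ea'; ring.
Qed.

Definition T (n i k : nat) : int := \sum_(0 <= j < (i + k).+1) Az i k j * Fz n j.

Lemma T_step n i k : (k.+1)%:Z ^+ 2 * T n i k.+1 =
  (n%:Z * (n%:Z + 1) - k%:Z * (k%:Z + 1)) * T n i k.
Proof.
rewrite /T addnS big_nat_recr //= mulrDr mulr_sumr.
set s := (i + k)%N.
have H1 : (n%:Z * (n%:Z + 1) - k%:Z * (k%:Z + 1)) * \sum_(0 <= j < s.+1) Az i k j * Fz n j =
  \sum_(0 <= j < s.+1) ((j%:Z) ^+ 2 * Az i k j.-1 * Fz n j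
       + (j%:Z * (j%:Z + 1) - k%:Z * (k%:Z + 1)) * Az i k j * Fz n j)
  + (s.+1)%:Z ^+ 2 * Az i k s * Fz n s.+1.
  rewrite big_split /= -addrA [X in _ = _ + X]addrC addrA.
  rewrite -(@big_nat_recr _ _ _ s.+1 0 (fun j : nat => (j%:Z) ^+ 2 * Az i k j.-1 * Fz n j)) //=.
  rewrite (@big_nat_recl _ _ _ s.+1 0 (fun j : nat => (j%:Z) ^+ 2 * Az i k j.-1 * Fz n j)) //=.
  rewrite -[Posz 0]/(0:int) expr2 !mul0r add0r -big_split /= mulr_sumr.
  apply: eq_bigr => j _.
  have := F_rec n j => h.
  transitivity (Az i k j * (Fz n j.+1 * (j.+1)%:Z ^+ 2) +
     (j%:Z * (j%:Z + 1) - k%:Z * (k%:Z + 1)) * Az i k j * Fz n j); last by ring.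
  rewrite h.
  ring.
rewrite H1; congr (_ + _).
  apply: eq_big_nat => j /andP[_ hj].
  rewrite mulrA A_rec; last by lia.
  ring.
by rewrite mulrA (A_last i k).
Qed.

Lemma T0 n i : T n i 0 = Fz n i.
Proof.
rewrite /T addn0 big_nat_recr //= big1_seq ?add0r.
  by rewrite /Az addn0 subnn !bin0 binn !mul1n mul1r.
move=> j; rewrite mem_iota => /andP[_ hj]; rewrite /Az (@bin_small j i) ?muln0 ?mul0r //; lia.
Qed.

Lemma FT n i k : Fz n i * Fz n k = T n i k.
Proof.
elim: k => [|k IH].
  by rewrite T0 /Fz bin0 addn0 bin0 mulr1.
apply: (@mulfI _ ((k.+1)%:Z ^+ 2)); first by rewrite expf_neq0.
rewrite T_step -IH.
transitivity (Fz n i * (Fz n k.+1 * (k.+1)%:Z ^+ 2)); first by ring.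
rewrite F_rec; ring.
Qed.

Theorem mainTheorem3 (n i k : nat) :
  ('C(n, i) * 'C(n + i, i) * 'C(n, k) * 'C(n + k, k))%N =
  (\sum_(0 <= j < (i + k).+1)
     'C(i + k, i) * multinom3 j (j%:Z - i%:Z) (j%:Z - k%:Z) (i%:Z + k%:Z - j%:Z)
       * 'C(n, j) * 'C(n + j, j))%N.
Proof.
rewrite (eq_big_nat _ _ (F2 := fun j => 'C(i + k, i) * ('C(j, i) * 'C(i, i + k - j)) * 'C(n, j) * 'C(n + j, j))%N); last first.
  by move=> j /andP[_ hj]; rewrite multinomE //; lia.
have key : forall a b : nat, a%:Z = b%:Z -> a = b by move=> a b [].
apply: key.
rewrite (big_morph Posz PoszD (erefl 0%Z)).
rewrite -mulnA PoszM.
have := FT n i k; rewrite /T /Fz => ->.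
apply: eq_bigr => j _; rewrite /Az /Fz !PoszM; ring.
Qed.
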